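(* Let $x$ be a vertex of $\mathcal{B}(G)$, and identify $\bar M_x'$ with $\mathfrak{f}^\times\times\bar M_x$ via the unique splitting of $\bar{\mathbf{M}}_x'\to\bar{\mathbf{M}}_x$. Then every $\epsilon$-genuine depth zero type for $\tilde G$ at $x$ has the form $(x,\epsilon\boxtimes\sigma)$, where $\sigma$ is a cuspidal irreducible representation of $\bar M_x$.
   Context: Let $F$ be a finite extension of $\mathbb{Q}_p$ with $p\neq2$, with valuation ring $\mathcal{O}$ and finite residue field $\mathfrak{f}$. Let $F^{unr}$ be its maximal unramified extension, with residue field $\bar{\mathfrak{f}}$, and let $\Gamma=\mathrm{Gal}(F^{unr}/F)$. Let $\mathbf{G}=\mathbf{Sp}_{2n}$, $G=\mathrm{Sp}_{2n}(F)$, and $G^{unr}=\mathbf{G}(F^{unr})$. Let $\mathcal{B}(G)$ be the Bruhat–Tits building of $G$. For $x\in\mathcal{B}(G)$, $G_x$ is the parahoric subgroup attached to $x$ and $G_x^+$ its pro-unipotent radical; $G_x^{unr}$ and $G_x^{unr,+}$ are the analogous subgroups of $G^{unr}$. Let $\bar{\mathbf{M}}_x$ be the maximal reductive quotient of the special fibre of the Bruhat–Tits $\mathcal{O}$-group scheme attached to $x$, so that $\bar M_x:=\bar{\mathbf{M}}_x(\mathfrak{f})\cong G_x/G_x^+$. For a vertex $x$, $\bar{\mathbf{M}}_x$ is a product of two symplectic groups over $\mathfrak{f}$, hence simply connected. Let $\mathbf{G}'$ be the universal (Matsumoto) central extension of $\mathbf{Sp}_{2n}$ by $\mathcal{K}_2$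 on the big Zariski site of $F$. Pushing forward along the tame symbol gives central extensions $1\to\bar{\mathfrak{f}}^\times\to\tilde G^{unr}\to G^{unr}\to1$ and, on $\Gamma$-fixed points, $1\to\mathfrak{f}^\times\to\tilde G\to G\to1$. Tildes denote preimages. By Deligne–Brylinski, for each $x$ there is a central extension $1\to\bar{\mathbf{G}}_m\to\bar{\mathbf{M}}_x'\to\bar{\mathbf{M}}_x\to1$ over $\mathfrak{f}$ such that $\tilde G_x^{unr}$ is, $\Gamma$-equivariantly, the pullback of $\bar{\mathbf{M}}_x'(\bar{\mathfrak{f}})$ along $G_x^{unr}\to\bar{\mathbf{M}}_x(\bar{\mathfrak{f}})$. The pro-$p$ group $G_x^+$ is regarded as a subgroup of $\tilde G$ via its unique splitting. Then $\tilde G_x/G_x^+\cong\bar M_x':=\bar{\mathbf{M}}_x'(\mathfrak{f})$. For a vertex $x$, the extension $\bar{\mathbf{M}}_x'\to\bar{\mathbf{M}}_x$ splits uniquely. Let $\epsilon\colon\mathfrak{f}^\times\to\{\pm1\}$ be the unique surjective homomorphism. A representation is $\epsilon$-genuine if $\mathfrak{f}^\times$ acts through $\epsilon$. An $\epsilon$-genuine depth zero type at $x$ is a pair $(x,\rho)$ with $\rho$ an $\epsilon$-genuine cuspidal (in the sense of Harish-Chandra) irreducible representation of $\bar M_x'$. *)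

(* Defs.v *)
From HB Require Import structures.
From mathcomp Require Import all_boot all_order all_algebra all_fingroup all_field all_character.
Set Implicit Arguments. Unset Strict Implicit. Unset Printing Implicit Defensive.
Import Order.TTheory GRing.Theory Num.Theory.
Local Open Scope ring_scope.

(* Setting: f = F a finite field of odd characteristic; a vertex x of the
   building of Sp_{2n}(F_loc) has reductive quotient
   Mbar_x = Sp_{2a}(f) x Sp_{2b}(f), a + b = n.  We realise it block-diagonally
   inside GL_N(f), N = 2(a+b) (we write N.-1.+1 for the matrix size, the
   convention of {'GL_N[F]}).  Coordinates 0..2a-1 span V_A, 2a..2a+2b-1 span
   V_B; on each block the standard form [[0, I], [-I, 0]]. *)

Section Sp.
Variables (F : finFieldType) (a b : nat).

Definition NN := (2 * (a + b))%N.
Notation d := NN.-1.+1.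

Definition Jblk (m k l : nat) : F :=
  if (k < m)%N && (l == k + m)%N then 1
  else if (l < m)%N && (k == l + m)%N then -1 else 0.

Definition Jmx : 'M[F]_d := \matrix_(i, j)
  if (i < 2 * a)%N && (j < 2 * a)%N then Jblk a i j
  else if (2 * a <= i)%N && (2 * a <= j)%N then Jblk b (i - 2 * a) (j - 2 * a)
  else 0.

Definition EA : 'M[F]_d := \matrix_(i, j) ((i == j) && (i < 2 * a)%N)%:R.
Definition EB : 'M[F]_d := \matrix_(i, j) ((i == j) && (2 * a <= i)%N)%:R.

Definition Mbar : {set {'GL_NN[F]}} :=
  [set g : {'GL_NN[F]} | [&& (val g) *m Jmx *m (val g)^T == Jmx,
                             (EA *m val g <= EA)%MS & (EB *m val g <= EB)%MS]].

Definition perpIn (E W : 'M[F]_d) : 'M[F]_d := (kermx (Jmx *m W^T) :&: E)%MS.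

Definition isoFlag (E : 'M[F]_d) (ws : seq 'M[F]_d) : bool :=
  sorted (fun X Y => (X < Y)%MS) ((0 : 'M[F]_d) :: ws) &&
  all (fun W => (W <= E)%MS && (W *m Jmx *m W^T == 0)) ws.

Definition fullFlag (E : 'M[F]_d) (ws : seq 'M[F]_d) : seq 'M[F]_d :=
  (0 : 'M[F]_d) :: ws ++ map (perpIn E) (rev ws) ++ [:: E].

Definition trivOnFlag (E : 'M[F]_d) (ws : seq 'M[F]_d) (g : 'M[F]_d) : bool :=
  let c := fullFlag E ws in
  all (fun XY => (XY.2 *m (g - 1%:M) <= XY.1)%MS) (zip c (behead c)).

(* Unipotent radical of the parabolic P_A x P_B of Mbar attached to the
   isotropic flags wsA (in V_A) and wsB (in V_B). *)
Definition unipRad (wsA wsB : seq 'M[F]_d) : {set {'GL_NN[F]}} :=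
  [set g in Mbar | trivOnFlag EA wsA (val g) && trivOnFlag EB wsB (val g)].

Definition properFlags (wsA wsB : seq 'M[F]_d) : Prop :=
  [/\ isoFlag EA wsA, isoFlag EB wsB & (0 < size wsA + size wsB)%N].

Definition cuspidalM (G : {group {'GL_NN[F]}}) n
    (sigma : mx_representation algC G n) : Prop :=
  forall wsA wsB, properFlags wsA wsB -> rfix_mx sigma (unipRad wsA wsB) = 0.

(* Mbar'_x = f^x x Mbar_x (split extension); its proper parabolics are
   f^x x P, with unipotent radicals 1 x U *)
Definition Mprime : {set ({unit F} * {'GL_NN[F]})} := setX [set: {unit F}] Mbar.

Definition cuspidalMp (G : {group ({unit F} * {'GL_NN[F]})}) n
    (rho : mx_representation algC G n) : Prop :=
  forall wsA wsB, properFlags wsA wsB ->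
    rfix_mx rho (setX [set (1%g : {unit F})] (unipRad wsA wsB)) = 0.

End Sp.

(* epsilon : f^x -> {+-1}, the quadratic character (the unique surjective
   homomorphism onto {+-1} when |f| is odd), valued in algC *)
Definition eps (F : finFieldType) (z : {unit F}) : algC :=
  if [exists y : F, y ^+ 2 == val z] then 1 else -1.

(* Main.v *)
Require Import Defs.
From HB Require Import structures.
From mathcomp Require Import all_boot all_order all_algebra all_fingroup all_field all_character.
Import Order.TTheory GRing.Theory Num.Theory.
Local Open Scope ring_scope.

Theorem mainTheorem13 (F : finFieldType) (a b : nat)
  (hchar : 2%N \notin [pchar F]) (hn : (0 < a + b)%N)
  (M : {group {'GL_(NN a b)[F]}}) (hM : M :=: Mbar F a b)
  (n : nat)
  (rho : mx_representation algC (setX [set: {unit F}] M)%G n)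
  (hgen : forall z : {unit F}, rho (z, 1%g) = (eps z)%:M)
  (hirr : mx_irreducible rho)
  (hcusp : cuspidalMp rho) :
  exists sigma : mx_representation algC M n,
    [/\ mx_irreducible sigma, cuspidalM sigma &
        exists2 B : 'M[algC]_n, B \in unitmx &
          forall (z : {unit F}) (g : {'GL_(NN a b)[F]}), g \in M ->
            rho (z, g) *m B = B *m (eps z *: sigma g)].
Proof.
have inS : forall (z : {unit F}) g, g \in M -> (z, g) \in setX [set: {unit F}] M.
  by move=> z g Hg; rewrite inE /= in_setT Hg.
have hrep : mx_repr M (fun g => rho (1%g, g)).
  split; first exact: (repr_mx1 rho).
  move=> g h Hg Hh /=.
  rewrite -(repr_mxM rho (inS _ _ Hg) (inS _ _ Hh)).
  have -> : (((1%g : {unit F}), g) * ((1%g : {unit F}), h))%g = (1%g, (g * h)%g).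
    by rewrite -[LHS]/((1 * 1)%g, (g * h)%g) mulg1.
  by [].
pose sigma := MxRepresentation hrep.
have dec : forall z g, g \in M -> rho (z, g) = eps z *: sigma g.
  move=> z g Hg.
  have -> : (z, g) = ((z, 1%g) * (1%g, g))%g.
    by rewrite -[RHS]/((z * 1)%g, (1 * g)%g) mulg1 mul1g.
  rewrite (repr_mxM rho (inS _ _ (group1 M)) (inS _ _ Hg)) hgen.
  by rewrite mul_scalar_mx.
exists sigma; split.
- case/mx_irrP: hirr => npos irr; apply/mx_irrP; split => // U modU nzU.
  apply: irr nzU; apply/mxmoduleP => -[z g] /setXP [_ Hg].
  rewrite dec // -scalemxAr; apply: scalemx_sub.
  by move/mxmoduleP: modU; apply.
- move=> wsA wsB hp; have := hcusp wsA wsB hp.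
  move=> h0; apply/eqP; rewrite -submx0 -h0; apply/rfix_mxP => x.
  case: x => z g /setXP [].
  rewrite inE => /eqP -> Hg.
  have HgM : g \in M by move: Hg; rewrite inE hM => /andP [].
  have -> : rho (1%g, g) = sigma g by [].
  exact: rfix_mx_id.
- exists 1%:M; first exact: unitmx1.
  by move=> z g Hg; rewrite mul1mx mulmx1 dec.
Qed.
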